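(* Let $n,d,c\in\mathbb{N}$ with $d\ge 50$ and $c\in[d]$, let $\mathcal{F}\subseteq 2^{[n]}$ be a hereditary family with $\delta(\mathcal{F})\ge 2^{d-1}-c+1$, and let $P$ be an isolated pile of $\mathcal{F}$ with $\sum_{x\in P}\omega_{\mathcal{F}}(x)<2^d-c$. Then the number $u$ of good vertices in $P$ satisfies $u\le 7$.
   Context: A family is hereditary if it is closed under taking subsets. $d_{\mathcal{F}}(x)=|\{F\in\mathcal{F}:x\in F\}|$, $\delta(\mathcal{F})=\min_x d_{\mathcal{F}}(x)$, $N(x)=\bigcup_{x\in F\in\mathcal{F}}F$. The weight of $x$ is $\omega_{\mathcal{F}}(x)=\sum_{x\in F\in\mathcal{F}}\frac{1}{|F|}$. A vertex $x$ is good if $|N(x)|\ge d+1$ and bad if $|N(x)|=d$. A set $P\subseteq[n]$ with $|P|=d$ is a pile of $\mathcal{F}$ if $P\subseteq N(y)$ for every $y\in P$, and there exists $z\in P$ with $N(z)=P$; a pile is isolated if it is disjoint from every other pile. *)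

(* Defs.v *)
From mathcomp Require Import all_boot all_order all_algebra.
Set Implicit Arguments. Unset Strict Implicit. Unset Printing Implicit Defensive.
Import GRing.Theory Num.Theory.

Section Defs.
Variable n : nat.
Implicit Types (F : {set {set 'I_n}}) (x y z : 'I_n) (P : {set 'I_n}).

Definition hereditary F : Prop :=
  forall A B : {set 'I_n}, A \in F -> B \subset A -> B \in F.

Definition deg F x : nat := #|[set A in F | x \in A]|.

Definition min_deg_ge F (k : nat) : Prop := forall x, k <= deg F x.

Definition nbhd F x : {set 'I_n} := \bigcup_(A in F | x \in A) A.

Definition weight F x : rat := \sum_(A in F | x \in A) (#|A|%:R)^-1.

Definition good F (d : nat) x : bool := d.+1 <= #|nbhd F x|.
Definition bad F (d : nat) x : bool := #|nbhd F x| == d.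

Definition pile F (d : nat) P : Prop :=
  #|P| = d /\ (forall y, y \in P -> P \subset nbhd F y) /\
  (exists2 z, z \in P & nbhd F z = P).

Definition isolated_pile F (d : nat) P : Prop :=
  pile F d P /\ (forall Q, pile F d Q -> Q <> P -> [disjoint P & Q]).
End Defs.

(* Main.v *)
Require Import Defs.
From mathcomp Require Import all_boot all_order all_algebra.
From mathcomp Require Import zify ring lra.
Import Order.TTheory GRing.Theory Num.Theory.
Set Implicit Arguments. Unset Strict Implicit. Unset Printing Implicit Defensive.





Lemma card_interval (T : finType) (R S : {set T}) : R \subset S ->
  #|[set A : {set T} | (R \subset A) && (A \subset S)]| = 2 ^ (#|S| - #|R|).
Proof.
move=> RS.
have -> : [set A : {set T} | (R \subset A) && (A \subset S)] =
          [set B :|: R | B in powerset (S :\: R)].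
  apply/setP=> A; rewrite inE; apply/andP/imsetP.
  - case=> RA AS; exists (A :\: R); first by rewrite inE setSD.
    apply/setP=> x; rewrite !inE; case: (boolP (x \in R)) => xR /=.
      by rewrite (subsetP RA x xR).
    by rewrite orbF.
  - case=> B; rewrite inE => BS ->; split; first exact: subsetUr.
    rewrite subUset RS andbT; exact: subset_trans BS (subsetDl _ _).
rewrite card_in_imset ?card_powerset.
  by rewrite cardsD (setIidPr RS).
move=> B1 B2; rewrite !inE => H1 H2 E.
apply/setP=> x; have := congr1 (fun X : {set T} => x \in X) E; rewrite !inE.
case xR: (x \in R); last by rewrite !orbF.
move/subsetP: H1 => /(_ x); move/subsetP: H2 => /(_ x); rewrite !inE xR /=.
case: (x \in B1); case: (x \in B2) => //= ; by move=> _ /(_ isT).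
Qed.

Lemma extend_subset (T : finType) (R S : {set T}) k : R \subset S -> (#|R| <= k <= #|S|)%N ->
  exists Q : {set T}, [/\ R \subset Q, Q \subset S & #|Q| = k].
Proof.
move=> RS /andP[]; move: R RS; elim: k => [|k IH] R RS.
  by rewrite leqn0 cards_eq0 => /eqP -> _; exists set0; split; rewrite ?sub0set ?cards0.
rewrite leq_eqVlt => /orP[/eqP <- _|]; first by exists R.
rewrite ltnS => Rk kS.
have [Q [RQ QS cQ]] := IH R RS Rk (ltnW kS).
have : Q \proper S by rewrite properEcard QS cQ.
case/properP=> _ [x xS xQ].
exists (x |: Q); split.
- exact: subset_trans RQ (subsetUr _ _).
- by rewrite subUset sub1set xS.
- by rewrite cardsU1 xQ cQ.
Qed.

Lemma card_compl (T : finType) (P : {set T}) (p : pred {set T}) :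
  #|[set A : {set T} | (A \subset P) && p A]| = #|[set A : {set T} | (A \subset P) && p (P :\: A)]|.
Proof.
have K (A : {set T}) : A \subset P -> P :\: (P :\: A) = A.
  move=> AP; apply/setP=> x; rewrite !inE negb_and negbK.
  case xA: (x \in A) => /=; first exact: (subsetP AP x xA).
  by case: (x \in P).
have -> : [set A : {set T} | (A \subset P) && p A] =
    [set P :\: A | A in [set A : {set T} | (A \subset P) && p (P :\: A)]].
  apply/setP=> A; rewrite inE; apply/andP/imsetP.
  - case=> AP pA; exists (P :\: A); last by rewrite K.
    by rewrite inE subsetDl K.
  - case=> B; rewrite inE => /andP[BP pB] ->; by rewrite subsetDl.
rewrite card_in_imset //.
by move=> A B; rewrite !inE => /andP[AP _] /andP[BP _] E; rewrite -(K A AP) -(K B BP) E.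
Qed.


Lemma card_split (T : finType) (X : {set T}) (q : pred T) :
  (#|[set a in X | q a]| + #|[set a in X | ~~ q a]| = #|X|)%N.
Proof.
rewrite -(cardsID [set a | q a] X); congr (_ + _);
  by apply: eq_card => a; rewrite !inE // andbC.
Qed.

Definition Tf n (F : {set {set 'I_n}}) (P : {set 'I_n}) :=
  [set T : {set 'I_n} | (T \subset P) && (P :\: T \notin F)].

Lemma Tf_down n (F : {set {set 'I_n}}) P (T S : {set 'I_n}) :
  hereditary F -> T \in Tf F P -> S \subset T -> S \in Tf F P.
Proof.
move=> hF; rewrite !inE => /andP[TP nT] ST; rewrite (subset_trans ST TP) /=.
apply: contra nT => H; apply: hF H _; exact: setDS.
Qed.

Lemma deg_eq n (F : {set {set 'I_n}}) (P : {set 'I_n}) x : x \in P ->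
  (deg F x + #|Tf F P| = 2 ^ (#|P|.-1) + #|[set T in Tf F P | x \in T]|
     + #|[set A in F | (x \in A) && ~~ (A \subset P)]|)%N.
Proof.
move=> xP.
have h1 : deg F x = (#|[set A in F | (x \in A) && (A \subset P)]|
      + #|[set A in F | (x \in A) && ~~(A \subset P)]|)%N.
  rewrite /deg -(card_split [set A in F | x \in A] (fun A => A \subset P)).
  by congr (_ + _); apply: eq_card => A; rewrite !inE andbA.
have h2 : #|Tf F P| = (#|[set T in Tf F P | x \in T]| + #|[set T in Tf F P | x \notin T]|)%N
  by rewrite card_split.
have h3 : 2 ^ (#|P|.-1) = #|[set A : {set 'I_n} | ([set x] \subset A) && (A \subset P)]|.
  by rewrite card_interval ?sub1set // cards1 subn1.
have h4 : #|[set A : {set 'I_n} | ([set x] \subset A) && (A \subset P)]| =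
   (#|[set A in F | (x \in A) && (A \subset P)]| +
    #|[set A : {set 'I_n} | (A \subset P) && ((x \in A) && (A \notin F))]|)%N.
  rewrite -(card_split [set A : {set 'I_n} | ([set x] \subset A) && (A \subset P)] (fun A => A \in F)); congr (_ + _); apply: eq_card => A;
  rewrite !inE sub1set;
  by case: (x \in A); case: (A \subset P); case: (A \in F).
have h5 : #|[set A : {set 'I_n} | (A \subset P) && ((x \in A) && (A \notin F))]| =
    #|[set T in Tf F P | x \notin T]|.
  rewrite card_compl; apply: eq_card => T; rewrite !inE xP /=.
  by case: (x \in T); case: (T \subset P); case: (P :\: T \in F).
lia.
Qed.

Local Open Scope ring_scope.

Lemma sum_sub (I : finType) (p1 p2 : pred I) (f : I -> rat) :
  (forall i, p1 i -> p2 i) -> (forall i, p2 i -> 0 <= f i) ->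
  \sum_(i | p1 i) f i <= \sum_(i | p2 i) f i.
Proof.
move=> h12 h0; rewrite [X in _ <= X]big_mkcond [X in X <= _]big_mkcond /=.
apply: ler_sum => i _; case p1i: (p1 i); first by rewrite (h12 _ p1i).
by case p2i: (p2 i) => //; apply: h0.
Qed.

Lemma sum_ge_const (I : finType) (p : pred I) (f : I -> rat) a :
  (forall i, p i -> a <= f i) -> a * (#|[set i | p i]|%:R) <= \sum_(i | p i) f i.
Proof.
move=> h; apply: le_trans (ler_sum _ h); rewrite sumr_const.
rewrite mulr_natr.
have -> : #|[set i | p i]| = #|p| by apply: eq_card => i; rewrite inE.
by [].
Qed.

Lemma inv_le (s m : nat) : (0 < s)%N -> (s <= m)%N -> (m%:R)^-1 <= (s%:R)^-1 :> rat.
Proof.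
move=> s0 sm; rewrite lef_pV2 ?posrE ?ltr0n ?ler_nat //; exact: leq_trans sm.
Qed.

Lemma inv_le2 (s m : nat) : (0 < s)%N -> (s <= m.+1)%N -> (0 < m)%N ->
  (m%:R)^-1 <= 2 * (s%:R)^-1 :> rat.
Proof.
move=> s0 sm m0.
have h : ((m.*2)%:R)^-1 <= (s%:R)^-1 :> rat by apply: inv_le => //; lia.
have -> : (m%:R)^-1 = 2 * ((m.*2)%:R)^-1 :> rat.
  rewrite -muln2 natrM invfM mulrCA divff ?mulr1 //.
rewrite ler_pM2l //.
Qed.

Lemma cube_card n (R Q : {set 'I_n}) : R \subset Q ->
  (#|[set S : {set 'I_n} | (R \subset S) && (S \subset Q)] :\ Q| = 2 ^ (#|Q| - #|R|) - 1)%N.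
Proof.
move=> RQ; rewrite -(card_interval RQ) (cardsD1 Q [set S : {set 'I_n} | (R \subset S) && (S \subset Q)]).
by rewrite inE RQ subxx /= add1n subn1.
Qed.

Lemma cube_mem n (R Q S : {set 'I_n}) :
  S \in [set S : {set 'I_n} | (R \subset S) && (S \subset Q)] :\ Q ->
  [/\ R \subset S, S \subset Q & (#|S| < #|Q|)%N].
Proof.
rewrite !inE => /andP[SQ /andP[RS SsQ]]; split => //.
by apply: proper_card; rewrite properEneq SQ SsQ.
Qed.

Lemma star n (F : {set {set 'I_n}}) (P : {set 'I_n}) x (L K' : nat) :
  hereditary F -> x \in P -> (0 < L)%N -> (K' < 2 ^ L)%N ->
  (K' <= #|[set T in Tf F P | x \in T]| + #|[set A in F | (x \in A) && ~~ (A \subset P)]|)%N ->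
  K'%:R / L%:R <= \sum_(T in Tf F P | x \in T) (#|T|%:R)^-1
     + 2 * \sum_(A in F | (x \in A) && ~~ (A \subset P)) (#|A|%:R)^-1 :> rat.
Proof.
move=> hF xP L0 KL Kto.
set al := \sum_(T in Tf F P | x \in T) _.
set w := \sum_(A in F | _) _.
have al0 : 0 <= al by apply: sumr_ge0 => T _; rewrite invr_ge0 ler0n.
have w0 : 0 <= w by apply: sumr_ge0 => T _; rewrite invr_ge0 ler0n.
have KLr : K'%:R / L%:R <= (2 ^ L - 1)%N%:R / L%:R :> rat.
  by rewrite ler_pM2r ?invr_gt0 ?ltr0n // ler_nat; lia.
have [hex|hex] := boolP [exists T : {set 'I_n}, (T \in Tf F P) && (x \in T) && (L < #|T|)%N].
  case/existsP: hex => T /andP[/andP[TT xT] LT].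
  have [Q [xQ QT cQ]] : exists Q : {set 'I_n}, [/\ [set x] \subset Q, Q \subset T & #|Q| = L.+1].
    by apply: extend_subset; rewrite ?sub1set // cards1.
  set G := [set S : {set 'I_n} | ([set x] \subset S) && (S \subset Q)] :\ Q.
  have cG : #|G| = (2 ^ L - 1)%N by rewrite cube_card // cQ cards1 subSS subn0.
  apply: (le_trans KLr); apply: (@le_trans _ _ al); last by rewrite lerDl mulr_ge0.
  have h1 : (2 ^ L - 1)%N%:R / L%:R <= \sum_(S | S \in G) (#|S|%:R)^-1 :> rat.
    rewrite mulrC -cG.
    have -> : #|G| = #|[set S | S \in G]| by apply: eq_card => S; rewrite inE.
    apply: sum_ge_const => S /cube_mem [xS SQ SQc]; apply: inv_le.
      by rewrite card_gt0; apply/set0Pn; exists x; rewrite -sub1set.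
    by rewrite -ltnS -cQ.
  apply: (le_trans h1); rewrite /al; apply: sum_sub.
    move=> S /cube_mem [xS SQ _]; rewrite sub1set in xS; rewrite xS andbT.
    exact: Tf_down TT (subset_trans SQ QT).
  by move=> S _; rewrite invr_ge0 ler0n.
move: hex; rewrite negb_exists => /forallP hT.
have [hex|hex] := boolP [exists A : {set 'I_n}, (A \in F) && (x \in A) && ~~ (A \subset P) && (L.+1 < #|A|)%N].
  case/existsP: hex => A /andP[/andP[/andP[AF xA] AP] LA].
  case/subsetPn: AP => y yA yP.
  have xy : x != y by apply: contraNneq yP => <-.
  have [Q [xQ QA cQ]] : exists Q : {set 'I_n}, [/\ [set x; y] \subset Q, Q \subset A & #|Q| = L.+2].
    by apply: extend_subset; rewrite ?subUset ?sub1set ?xA ?yA // cards2 xy.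
  set G := [set S : {set 'I_n} | ([set x; y] \subset S) && (S \subset Q)] :\ Q.
  have cG : #|G| = (2 ^ L - 1)%N by rewrite cube_card // cQ cards2 xy !subSS subn0.
  apply: (le_trans KLr); apply: (@le_trans _ _ (2 * w)); last by rewrite lerDr.
  have h1 : (2 ^ L - 1)%N%:R / L%:R <= \sum_(S | S \in G) 2 * (#|S|%:R)^-1 :> rat.
    rewrite mulrC -cG.
    have -> : #|G| = #|[set S | S \in G]| by apply: eq_card => S; rewrite inE.
    apply: sum_ge_const => S /cube_mem [xS SQ SQc]; apply: inv_le2 => //.
      by rewrite card_gt0; apply/set0Pn; exists x; apply: (subsetP xS); rewrite !inE eqxx.
    by rewrite -ltnS -cQ.
  apply: (le_trans h1); rewrite /w -mulr_sumr ler_pM2l //; apply: sum_sub.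
    move=> S /cube_mem [xyS SQ _].
    have xS : x \in S by apply: (subsetP xyS); rewrite !inE eqxx.
    have yS : y \in S by apply: (subsetP xyS); rewrite !inE eqxx orbT.
    rewrite (hF _ _ AF (subset_trans SQ QA)) xS /=.
    by apply/subsetPn; exists y.
  by move=> S _; rewrite invr_ge0 ler0n.
move: hex; rewrite negb_exists => /forallP hA.
have h1 : #|[set T in Tf F P | x \in T]|%:R / L%:R <= al.
  rewrite mulrC; apply: sum_ge_const => T /andP[TT xT]; apply: inv_le.
    by rewrite card_gt0; apply/set0Pn; exists x.
  by have := hT T; rewrite TT xT /= -leqNgt.
have h2 : #|[set A in F | (x \in A) && ~~ (A \subset P)]|%:R / L%:R <= 2 * w.
  rewrite mulrC /w mulr_sumr; apply: sum_ge_const => A /andP[AF /andP[xA AP]]; apply: inv_le2 => //.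
    by rewrite card_gt0; apply/set0Pn; exists x.
  by have := hA A; rewrite AF xA AP /= -leqNgt.
apply: le_trans (lerD h1 h2); rewrite -mulrDl -natrD.
by rewrite ler_pM2r ?invr_gt0 ?ltr0n // ler_nat.
Qed.

Lemma sum_const_card (I : finType) (p : pred I) (a : rat) :
  \sum_(i | p i) a = a * #|[set i | p i]|%:R.
Proof.
rewrite sumr_const mulr_natr.
have -> : #|[set i | p i]| = #|p| by apply: eq_card => i; rewrite inE.
by [].
Qed.

Theorem mainTheorem19 (n d c : nat) (F : {set {set 'I_n}}) (P : {set 'I_n}) :
  (50 <= d)%N -> (1 <= c <= d)%N ->
  hereditary F ->
  min_deg_ge F (2 ^ d.-1 - c + 1)%N ->
  isolated_pile F d P ->
  \sum_(x in P) weight F x < (2 ^ d)%:R - c%:R ->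
  (#|[set x in P | good F d x]| <= 7)%N.
Proof.
move=> d50 /andP[c1 cd] hF hdeg [[cP [_ [z zP Nz]]] _] hsum.
rewrite leqNgt; apply/negP => u8.
set u := #|[set x in P | good F d x]| in u8.
set N := #|Tf F P|.
pose w x := \sum_(A in F | (x \in A) && ~~ (A \subset P)) (#|A|%:R)^-1 : rat.
pose al x := \sum_(T in Tf F P | x \in T) (#|T|%:R)^-1 : rat.
set W := \sum_(x in P) w x.
have dpow : (d <= 2 ^ d.-1)%N.
  have := ltn_expl d.-1 (isT : (1 < 2)%N); move: d50; clear; case: d => //.
have subz A : A \in F -> z \in A -> A \subset P.
  move=> AF zA; rewrite -Nz; apply: (bigcup_sup A (P := fun B => (B \in F) && (z \in B))).
  by rewrite AF zA.
have oz : #|[set A in F | (z \in A) && ~~ (A \subset P)]| = 0%N.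
  apply/eqP; rewrite cards_eq0; apply/eqP/setP => A; rewrite !inE.
  by case AF: (A \in F); case zA: (z \in A) => //=; rewrite subz.
have degx x : x \in P -> (N + 1 <= #|[set T in Tf F P | x \in T]|
     + #|[set A in F | (x \in A) && ~~ (A \subset P)]| + c)%N.
  move=> xP; have := deg_eq F xP; have := hdeg x; rewrite cP; lia.
have hz := deg_eq F zP; rewrite oz addn0 cP in hz.
have spl := card_split (Tf F P) (fun T => z \in T).
have ab : (#|[set T in Tf F P | z \in T]| <= #|[set T in Tf F P | z \notin T]|)%N.
  rewrite -(card_in_imset (f := fun T => T :\ z)).
    apply: subset_leq_card; apply/subsetP => S /imsetP [T]; rewrite inE => /andP [TT zT] ->; rewrite inE.
    rewrite setD11 andbT; have := Tf_down hF TT (subD1set T z); by rewrite inE.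
  move=> T1 T2; rewrite !inE => /andP[_ z1] /andP[_ z2] E.
  by rewrite -(setD1K z1) -(setD1K z2) E.
have hdz := hdeg z.
have Nc : (N + 2 <= 2 * c)%N by rewrite /N; lia.
have F0 : set0 \in F.
  have : (0 < deg F z)%N by have := hdeg z; lia.
  rewrite /deg card_gt0 => /set0Pn [A]; rewrite inE => /andP[AF _].
  exact: hF AF (sub0set A).
have hsplit : \sum_(x in P) weight F x =
   \sum_(x in P) \sum_(A | ((A \in F) && (x \in A)) && (A \subset P)) (#|A|%:R)^-1 + W.
  rewrite /W -big_split /=; apply: eq_bigr => x _; rewrite /weight (bigID (fun A : {set 'I_n} => A \subset P)) /=.
  congr (_ + _); apply: eq_bigl => A; by rewrite andbA.
have hN : #|[set A : {set 'I_n} | (A \subset P) && (A \notin F)]| = N by rewrite card_compl.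
have hcin : (#|[set A in F | A \subset P]| + N = 2 ^ d)%N.
  rewrite -cP -card_powerset -(card_split (powerset P) (fun A => A \in F)) -hN.
  by congr (_ + _); apply: eq_card => A; rewrite !inE // andbC.
have hin : #|[set A in F | A \subset P]|%:R - 1 <=
   \sum_(x in P) \sum_(A | ((A \in F) && (x \in A)) && (A \subset P)) (#|A|%:R)^-1 :> rat.
  rewrite (exchange_big_dep (fun A => (A \in F) && (A \subset P))) /=; last first.
    by move=> x A _ /andP[/andP[-> _] ->].
  pose q := fun A : {set 'I_n} => (A \in F) && (A \subset P) && (A != set0).
  apply: (@le_trans _ _ (\sum_(A | q A) 1)).
    rewrite sum_const_card mul1r lerBlDr natr1 ler_nat.
    rewrite -(card_split [set A in F | A \subset P] (fun A => A != set0)).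
    have h1 : (#|[set a in [set A in F | A \subset P] | ~~ (a != set0)]| <= 1)%N.
      apply: (@leq_trans #|[set (set0 : {set 'I_n})]|); last by rewrite cards1.
      apply: subset_leq_card; apply/subsetP => A; rewrite !inE negbK; by case/andP.
    have h2 : #|[set a in [set A in F | A \subset P] | a != set0]| = #|[set i | q i]|.
      by apply/eq_card => A; rewrite !inE.
    lia.
  apply: (@le_trans _ _ (\sum_(A | q A) \sum_(x | (x \in P) && (((A \in F) && (x \in A)) && (A \subset P))) (#|A|%:R)^-1)); last first.
    apply: sum_sub; first by move=> A /andP[].
    move=> A _; apply: sumr_ge0 => x _; by rewrite invr_ge0 ler0n.
  rewrite le_eqVlt; apply/orP; left; apply/eqP; apply: eq_bigr => A.
    move=> /andP[/andP[AF AP] A0]; rewrite sum_const_card.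
    have -> : #|[set x | (x \in P) && (((A \in F) && (x \in A)) && (A \subset P))]| = #|A|.
      apply: eq_card => x; rewrite inE AF AP andbT /=.
      by case xA: (x \in A); rewrite ?andbF // (subsetP AP x xA).
    by rewrite mulVf // pnatr_eq0 cards_eq0.
have WK : W < N%:R + 1 - c%:R.
  have e : (2 ^ d)%:R = #|[set A in F | A \subset P]|%:R + N%:R :> rat by rewrite -natrD hcin.
  rewrite hsplit e in hsum; lra.
have w0 x : 0 <= w x by apply: sumr_ge0 => A _; rewrite invr_ge0 ler0n.
have Wu : u%:R / 2 <= W.
  apply: (@le_trans _ _ (\sum_(x | x \in [set x in P | good F d x]) w x)); last first.
    apply: sum_sub => [x|x _ //]; by rewrite inE => /andP[].
  rewrite mulrC.
  have -> : u = #|[set x | x \in [set x in P | good F d x]]| by apply: eq_card => x; rewrite !inE.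
  apply: sum_ge_const => x; rewrite inE => /andP[xP gx].
  have : ~~ (nbhd F x \subset P).
    apply/negP => H; have := subset_leq_card H; rewrite cP; move: gx; rewrite /good; lia.
  case/subsetPn => y; rewrite /nbhd => /bigcupP [A /andP[AF xA] yA] yP.
  have xy : x != y by apply: contraNneq yP => <-.
  have SF : [set x; y] \in F by apply: hF AF _; rewrite subUset !sub1set xA yA.
  rewrite /w (bigD1 [set x; y]) /=; last first.
    rewrite SF !inE eqxx /=; apply/subsetPn; exists y; by rewrite ?inE ?eqxx ?orbT.
  rewrite cards2 xy; apply: (@le_trans _ _ (2%:R^-1)) => //.
  by rewrite lerDl; apply: sumr_ge0 => A' _; rewrite invr_ge0 ler0n.
have k5 : (c + 4 < N + 1)%N.
  have u8r : (8%:R : rat) <= u%:R by rewrite ler_nat.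
  suff : ((c + 4)%:R : rat) < (N + 1)%:R by rewrite ltr_nat.
  rewrite !natrD; lra.
have s2 : \sum_(x in P) al x <= N%:R.
  rewrite /al (exchange_big_dep (fun T => T \in Tf F P)) /=; last by move=> x T _ /andP[].
  apply: (@le_trans _ _ (\sum_(T in Tf F P) 1)); last by rewrite sum_const_card mul1r ler_nat /N;
    apply/eq_leq/eq_card => T; rewrite inE.
  apply: ler_sum => T TT; rewrite sum_const_card.
  have TP : T \subset P by move: TT; rewrite inE => /andP[].
  have -> : #|[set x | (x \in P) && ((T \in Tf F P) && (x \in T))]| = #|T|.
    apply: eq_card => x; rewrite inE TT /=.
    by case xT: (x \in T); rewrite ?andbF // (subsetP TP x xT).
  have [->|T0] := eqVneq #|T| 0%N; first by rewrite mulr0.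
  by rewrite mulVf // pnatr_eq0.
have key K' L : (0 < L)%N -> (K' < 2 ^ L)%N -> (K' + c <= N + 1)%N ->
    (d * K' + 2 * c * L < L * (3 * N + 2))%N.
  move=> L0 KL Kk.
  have hx x : x \in P -> K'%:R / L%:R <= al x + 2 * w x.
    move=> xP; apply: star => //; have := degx x xP; lia.
  have s1 := sum_ge_const hx.
  have eP : #|[set x | x \in P]| = d by rewrite -cP; apply: eq_card => x; rewrite inE.
  rewrite eP big_split /= -mulr_sumr in s1.
  have h : (d * K')%:R / L%:R < (3 * N%:R + 2 - 2 * c%:R) :> rat.
    have -> : (d * K')%:R / L%:R = K'%:R / L%:R * d%:R :> rat by rewrite natrM; field; rewrite pnatr_eq0 -lt0n.
    rewrite -/W in s1; lra.
  rewrite ltr_pdivrMr ?ltr0n // in h.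
  suff : ((d * K' + 2 * c * L)%N%:R : rat) < (L * (3 * N + 2))%N%:R by rewrite ltr_nat.
  rewrite !natrD !natrM; rewrite natrM in h; nra.
have Kd : (N + 1 <= 2 * c)%N by lia.
have [k7|k7] := leqP (N + 1 - c) 7.
  have := key (N + 1 - c)%N 3%N isT ltac:(lia) ltac:(lia); nia.
have [k15|k15] := leqP (N + 1 - c) 15.
  have := key (N + 1 - c)%N 4%N isT ltac:(lia) ltac:(lia); nia.
have [k31|k31] := leqP (N + 1 - c) 31.
  have := key (N + 1 - c)%N 5%N isT ltac:(lia) ltac:(lia); nia.
have := key 31%N 5%N isT isT ltac:(lia); nia.
Qed.
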